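(* Let $a$ be a finite set, $\eta<\omega_1$, and $(R^{(\rho)})_{\rho\leq\eta}$ a resolution family of tree relations on $a^{<\omega}$ with $R^{(0)}=\prec$. Let $\rho<\eta$ and $s,s',s''\in a^{<\omega}$ with $s\prec s'\,R^{(\rho)}\,s''$ and $s\,R^{(\rho+1)}\,s''$. Then $s\,R^{(\rho+1)}\,s'$.
   Context: $\prec$ is the non-strict extension (initial segment) relation on $a^{<\omega}$. A partial order $R$ on $a^{<\omega}$ is a tree relation if for every $t\in a^{<\omega}$: $\emptyset\,R\,t$, and the set $\{s\in a^{<\omega}: s\,R\,t\}$ is finite and linearly ordered by $R$. If $R\subseteq S$ are tree relations, $R$ is distinguished in $S$ if for all $s,t,u$: $s\,S\,t\,S\,u$ and $s\,R\,u$ imply $s\,R\,t$. A family $(R^{(\rho)})_{\rho\leq\eta}$ of tree relations is a resolution family if $R^{(\rho+1)}$ is a distinguished subtree relation of $R^{(\rho)}$ (i.e. $R^{(\rho+1)}\subseteq R^{(\rho)}$ and distinguished in it) for each $\rho<\eta$, and $R^{(\lambda)}=\bigcap_{\rho<\lambda}R^{(\rho)}$ for each limit $\lambda\leq\eta$. *)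

(* Defs.v *)
From mathcomp Require Import all_boot.
Set Implicit Arguments. Unset Strict Implicit. Unset Printing Implicit Defensive.

(* Nodes of a^{<omega}: finite sequences over a finite type A.
   The non-strict extension relation s ≺ t is [prefix s t] (mathcomp seq). *)

Section Trees.
Variable A : finType.
Definition relS := seq A -> seq A -> Prop.

Definition partial_order (R : relS) :=
  [/\ forall s, R s s,
      forall s t, R s t -> R t s -> s = t &
      forall s t u, R s t -> R t u -> R s u].

Definition tree_relation (R : relS) :=
  [/\ partial_order R,
      forall t, R [::] t,
      forall t, exists l : seq (seq A), forall s, R s t -> s \in l &
      forall t s1 s2, R s1 t -> R s2 t -> R s1 s2 \/ R s2 s1].

Definition distinguished (R S : relS) :=
  forall s t u, S s t -> S t u -> R s u -> R s t.

Definition distinguished_subtree (R S : relS) :=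
  (forall s t, R s t -> S s t) /\ distinguished R S.
End Trees.

(* Ordinals <= eta with eta < omega_1 are represented by a countable type O
   with a strict well-order lt whose greatest element is eta: every such
   structure is order-isomorphic to the ordinal eta+1 with eta countable. *)
Section Ordinals.
Variables (O : Type) (lt : O -> O -> Prop).

Definition well_order :=
  [/\ forall x, ~ lt x x,
      forall x y z, lt x y -> lt y z -> lt x z,
      forall x y, x = y \/ lt x y \/ lt y x &
      well_founded lt].

Definition countable_type := exists f : O -> nat, forall x y, f x = f y -> x = y.

Definition is_greatest (eta : O) := forall x, x = eta \/ lt x eta.

Definition is_zero (z : O) := forall x, ~ lt x z.

Definition is_succ (r r' : O) :=
  lt r r' /\ forall x, lt r x -> x = r' \/ lt r' x.

Definition is_limit (l : O) := ~ is_zero l /\ ~ (exists r, is_succ r l).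

Definition countable_ordinal_upto (eta : O) :=
  [/\ well_order, countable_type & is_greatest eta].
End Ordinals.

Definition resolution_family (A : finType) (O : Type) (lt : O -> O -> Prop)
    (R : O -> relS A) :=
  [/\ forall r, tree_relation (R r),
      forall r r', is_succ lt r r' -> distinguished_subtree (R r') (R r) &
      forall l, is_limit lt l ->
        forall s t, R l s t <-> (forall r, lt r l -> R r s t)].

(* Main.v *)
Require Import Defs.
From mathcomp Require Import all_boot.
From Stdlib Require Import Classical.

Lemma sub_prefix (A : finType) (O : Type) (lt : O -> O -> Prop)
    (R : O -> seq A -> seq A -> Prop) :
  well_founded lt ->
  resolution_family lt R ->
  (forall z, is_zero lt z -> forall s t, R z s t <-> prefix s t) ->
  forall r s t, R r s t -> prefix s t.
Proof.
move=> wf [_ Hs Hl] H0 r; elim/(well_founded_induction wf): r => r IH s t Hr.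
destruct (classic (is_zero lt r)) as [Hz|Hnz]; first by apply/(H0 r Hz).
destruct (classic (exists q, is_succ lt q r)) as [[q Hq]|Hns].
  apply: (IH q (proj1 Hq)); by apply: (proj1 (Hs _ _ Hq)).
have Hlim : is_limit lt r by split.
apply: NNPP => Hc; apply: Hnz => x Hx; apply: Hc.
by apply: (IH x Hx); apply: (proj1 (Hl r Hlim s t) Hr).
Qed.

Theorem lemma2p3p2 (A : finType) (O : Type) (lt : O -> O -> Prop) (eta : O)
    (R : O -> seq A -> seq A -> Prop) :
  countable_ordinal_upto lt eta ->
  resolution_family lt R ->
  (forall z, is_zero lt z -> forall s t, R z s t <-> prefix s t) ->
  forall rho rho1, lt rho eta -> is_succ lt rho rho1 ->
  forall s s' s'' : seq A,
    prefix s s' -> R rho s' s'' -> R rho1 s s'' -> R rho1 s s'.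
Proof.
move=> [[_ _ _ wf] _ _] HR H0 rho rho1 _ Hsucc s s' s'' Hp H1 H2.
have HP := @sub_prefix A O lt R wf HR H0.
case: HR => Ht Hs _.
case: (Hs _ _ Hsucc) => Hsub Hdist.
case: (Ht rho) => _ _ _ Hlin.
have H3 : R rho s s'' := Hsub _ _ H2.
case: (Hlin s'' s s' H3 H1) => [Hss'|Hs's].
  exact: (Hdist _ _ _ Hss' H1 H2).
have Hp2 := HP _ _ _ Hs's.
have -> : s = s'.
  have e1 := size_prefix Hp; have e2 := size_prefix Hp2.
  move: Hp; rewrite prefixE => /eqP <-.
  by rewrite take_oversize // (@anti_leq (size s) (size s')) ?e1 ?e2.
by case: (Ht rho1) => [[Hrefl _ _] _ _ _].
Qed.
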